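(* Let $\mathsf{k}$ be a field, $n\ge 2$, $R=\mathsf{k}[x_1,\dots,x_r]$, $S=R[t]$, $A=\mathsf{k}[t]/(t^n)$. Let $F_B\in Q_R$ be homogeneous of degree $j_B$ and $B=R/\operatorname{Ann}_R(F_B)$. Put $G_0=F_B$ and let $G_1,\dots,G_{n-1}\in Q_R$ be homogeneous with $\deg G_i=j_B+i$. Let $$F=T^{[n-1]}G_0+T^{[n-2]}G_1+\cdots+T^{[n-1-i]}G_i+\cdots+G_{n-1}\in Q_S,$$ and $C=S/\operatorname{Ann}_S(F)$. Define ideals $I_0\subseteq I_1\subseteq\cdots\subseteq I_{n-1}\subseteq R$ by $I_0=\operatorname{Ann}_R(G_0)$ and $I_i=(I_{i-1}:\operatorname{Ann}_R(G_i))$ for $1\le i\le n-1$. (1) If $I_i\circ G_{n-1-i}\subseteq R\circ F_B$ for all $i=0,\dots,n-1$, then the sequence $\mathsf{k}\to A\xrightarrow{\iota} C\xrightarrow{\pi} B\to\mathsf{k}$ is coexact and $C$ is a free extension with base $A$ and fiber $B$ (via $\iota,\pi$). (2) Conversely, if $C$ is a free extension with base $A$ and fiber $B$ (via $\iota,\pi$), then $I_0\circ G_i\subseteq \sum_{j=0}^{i-1}R\circ G_j$ for every $i\in[1,n-1]$.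
   Context: All rings are graded; $R$ standard graded. $Q_R=\mathsf{k}_{DP}[X_1,\dots,X_r]$ and $Q_S=\mathsf{k}_{DP}[X_1,\dots,X_r,T]$ are divided power rings (basis of divided monomials $X^{[a]}=X_1^{[a_1]}\cdots$, with $X_k^{[i]}X_k^{[j]}=\binom{i+j}{j}X_k^{[i+j]}$), on which $R$ (resp. $S$) acts by contraction: $x_i^s\circ X_i^{[k]}=X_i^{[k-s]}$ if $k\ge s$ and $0$ otherwise, $x_i$ acting trivially on the other variables, and similarly $t$ on $T$. For $G\in Q_R$, $R\circ G$ is the $R$-submodule generated by $G$ and $\operatorname{Ann}_R(G)=\{g\in R: g\circ G=0\}$. For ideals, $(I:J)=\{f\in R: fJ\subseteq I\}$. The map $\iota:A\to C$ is induced by the inclusion $\mathsf{k}[t]\subset S$ and $\pi:C\to B$ by $S\to R$, $x_i\mapsto x_i$, $t\mapsto 0$. For graded Artinian algebras $A,B,C$ with maps $\iota:A\to C$, $\pi:C\to B$, $C$ is a free extension with base $A$ and fiber $B$ if $\iota$ makes $C$ a free $A$-module and $\pi$ is surjective with $\ker\pi=(\iota(A_+))C$, where $A_+$ is the ideal of positive-degree elements; the sequence $\mathsf{k}\to A\to C\to B\to\mathsf{k}$ is coexact if $\pi$ is surjective and $\ker\pi=(\iota(A_+))C$. *)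

(* Defs.v *)
From HB Require Import structures.
From mathcomp Require Import all_boot all_order all_algebra.
From mathcomp Require Import mpoly.
Set Implicit Arguments. Unset Strict Implicit. Unset Printing Implicit Defensive.
Import GRing.Theory.
Local Open Scope ring_scope.

Section Defs.
Variable k : fieldType.

(* The divided power ring k_DP[X_1..X_n] is modelled on the k-vector space
   {mpoly k[n]}: the monomial 'X_[a] stands for the divided monomial X^[a].
   (Only the k-vector space structure, the contraction action and products
   of divided monomials in disjoint sets of variables are used below.) *)

Definition contract_mon {n} (m : 'X_{1..n}) (G : {mpoly k[n]}) : {mpoly k[n]} :=
  \sum_(a <- msupp G | (m <= a)%MM) G@_a *: 'X_[(a - m)%MM].

Definition contract {n} (g G : {mpoly k[n]}) : {mpoly k[n]} :=
  \sum_(m <- msupp g) g@_m *: contract_mon m G.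

Definition Ann {n} (G : {mpoly k[n]}) (g : {mpoly k[n]}) : Prop := contract g G = 0.

Definition homog_of {n} (d : nat) (p : {mpoly k[n]}) : bool :=
  all [pred m | mdeg m == d] (msupp p).

Variable r : nat.
Local Notation R := {mpoly k[r]}.
Local Notation S := {mpoly k[r.+1]}.

(* the extra variable t of S = R[t] (and T of Q_S) is the last variable *)
Definition tvar : S := 'X_ord_max.

(* R -> S inclusion, also Q_R -> Q_S *)
Definition liftS (p : R) : S := mwiden p.

(* S -> R, x_i |-> x_i, t |-> 0 *)
Definition setT0 (phi : S) : R :=
  phi \mPo [tuple (if unlift ord_max i is Some j then 'X_j else 0 : R) | i < r.+1].

Definition kt_to_S (p : {poly k}) : S := \sum_(i < size p) p`_i *: tvar ^+ i.

Definition Fpoly (n : nat) (G : nat -> R) : S :=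
  \sum_(i < n) tvar ^+ (n - 1 - i) * liftS (G i).

Fixpoint Ichain (G : nat -> R) (i : nat) : R -> Prop :=
  match i with
  | 0 => fun f => Ann (G 0%N) f
  | i'.+1 => fun f => forall g, Ann (G i'.+1) g -> Ichain G i' (f * g)
  end.

(* A = k[t]/(t^n), C = S/Ann_S(F), B = R/Ann_R(FB); iota : A -> C, pi : C -> B.
   Coexactness: pi surjective and ker pi = (iota(A_+)) C, unfolded on representatives.
   A_+ = classes of polynomials with zero constant term. *)
Definition coexact (F : S) (FB : R) : Prop :=
  (forall g : R, exists phi : S, Ann FB (setT0 phi - g)) /\
  (forall phi : S, Ann FB (setT0 phi) <->
     exists (m : nat) (a : 'I_m -> {poly k}) (c : 'I_m -> S),
       (forall j, (a j)`_0 = 0) /\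
       Ann F (phi - \sum_(j < m) kt_to_S (a j) * c j)).

(* C is a free A-module via iota: a basis (c_i)_{i in I} of C over A,
   with finitely supported coefficient families. *)
Definition free_over_A (n : nat) (F : S) : Prop :=
  exists (I : eqType) (s : I -> S),
    (forall phi : S, exists (l : seq I) (a : I -> {poly k}),
        Ann F (phi - \sum_(i <- l) kt_to_S (a i) * s i)) /\
    (forall (l : seq I) (a : I -> {poly k}), uniq l ->
        Ann F (\sum_(i <- l) kt_to_S (a i) * s i) ->
        forall i, i \in l -> ('X^n %| a i)%R).

Definition free_extension (n : nat) (F : S) (FB : R) : Prop :=
  free_over_A n F /\ coexact F FB.

End Defs.

(* Main.v *)
Require Import Defs.
From HB Require Import structures.
From mathcomp Require Import all_boot all_order all_algebra.
From mathcomp Require Import mpoly.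
From mathcomp Require Import zify.
From Stdlib Require Import ClassicalEpsilon.
Set Implicit Arguments. Unset Strict Implicit. Unset Printing Implicit Defensive.
Import GRing.Theory.
Local Open Scope ring_scope.



Section Gen.
Variable k : fieldType.
Variable n : nat.
Local Notation P := {mpoly k[n]}.

Definition Lsum (p : P) (phi : 'X_{1..n} -> k) : k :=
  \sum_(m <- msupp p) p@_m * phi m.

Lemma Lsum_sub (p : P) phi (s : seq 'X_{1..n}) :
  uniq s -> {subset msupp p <= s} ->
  Lsum p phi = \sum_(m <- s) p@_m * phi m.
Proof.
move=> us sub; rewrite /Lsum.
rewrite [RHS](bigID (fun m => m \in msupp p)) /=.
rewrite [X in _ = _ + X]big1 ?addr0; last first.
  by move=> m /memN_msupp_eq0 ->; rewrite mul0r.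
rewrite -[RHS]big_filter; apply: perm_big.
apply: uniq_perm; [exact: msupp_uniq | exact: filter_uniq |].
by move=> m; rewrite mem_filter; case: (boolP (m \in msupp p)) => // /sub ->.
Qed.

Lemma LsumD (p q : P) phi : Lsum (p + q) phi = Lsum p phi + Lsum q phi.
Proof.
set s := undup (msupp p ++ msupp q ++ msupp (p + q)).
have us : uniq s by exact: undup_uniq.
rewrite !(@Lsum_sub _ _ s) //; try by move=> m h; rewrite mem_undup !mem_cat h ?orbT.
by rewrite -big_split /=; apply: eq_bigr => m _; rewrite mcoeffD mulrDl.
Qed.

Lemma LsumZ c (p : P) phi : Lsum (c *: p) phi = c * Lsum p phi.
Proof.
rewrite (@Lsum_sub _ _ (msupp p)) ?msupp_uniq //; last exact: msuppZ_le.
rewrite /Lsum mulr_sumr; apply: eq_bigr => m _; by rewrite mcoeffZ mulrA.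
Qed.

Lemma Lsum0 phi : Lsum 0 phi = 0.
Proof. by rewrite /Lsum msupp0 big_nil. Qed.

Lemma LsumX m phi : Lsum 'X_[m] phi = phi m.
Proof. by rewrite /Lsum msuppX big_seq1 mcoeffX eqxx mul1r. Qed.

Lemma Lsum_sum (I : Type) (r : seq I) (F : I -> P) phi :
  Lsum (\sum_(i <- r) F i) phi = \sum_(i <- r) Lsum (F i) phi.
Proof.
elim: r => [|x r IH]; first by rewrite !big_nil Lsum0.
by rewrite !big_cons LsumD IH.
Qed.

Lemma Lsum_ext (p : P) phi psi : (forall m, phi m = psi m) -> Lsum p phi = Lsum p psi.
Proof. by move=> h; apply: eq_bigr => m _; rewrite h. Qed.

Lemma Lsum_mull (p : P) c phi : Lsum p (fun m => c * phi m) = c * Lsum p phi.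
Proof. by rewrite /Lsum mulr_sumr; apply: eq_bigr => m _; rewrite mulrCA. Qed.

Lemma Lsum_ind (p : P) c : Lsum p (fun m => (m == c)%:R) = p@_c.
Proof.
rewrite {2}[p]mpolyE raddf_sum /=; apply: eq_bigr => m _.
by rewrite mcoeffZ mcoeffX.
Qed.

Lemma mcoef_sum (I : Type) (s : seq I) (Pr : pred I) (F : I -> P) m :
  (\sum_(i <- s | Pr i) F i)@_m = \sum_(i <- s | Pr i) (F i)@_m.
Proof.
elim: s => [|x s IH]; first by rewrite !big_nil mcoeff0.
by rewrite !big_cons; case: (Pr x); rewrite ?mcoeffD IH.
Qed.

Lemma coef_contract_mon m (G : P) b : (contract_mon m G)@_b = G@_(m + b).
Proof.
rewrite /contract_mon raddf_sum /=.
rewrite (eq_bigr (fun a => G@_a * (a == (m + b)%MM)%:R)); last first.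
  move=> a ma; rewrite mcoeffZ mcoeffX; congr (_ * _%:R).
  by rewrite -(eqm_add2r m) submK // addmC.
rewrite -big_filter.
rewrite (eq_bigr (fun a => G@_a * (a == (m + b)%MM)%:R)) //.
transitivity (Lsum G (fun a => (a == (m + b)%MM)%:R)); last exact: Lsum_ind.
rewrite /Lsum big_filter [RHS](bigID (fun a => (m <= a)%MM)) /=.
rewrite [X in _ = _ + X]big1 ?addr0 // => a /negbTE ma.
case: eqP => [ea|]; last by rewrite mulr0.
by move: ma; rewrite ea lem_addr.
Qed.

Lemma coef_contract (g G : P) b :
  (contract g G)@_b = Lsum g (fun m => G@_(m + b)).
Proof.
rewrite /contract raddf_sum /=; apply: eq_bigr => m _.
by rewrite mcoeffZ coef_contract_mon.
Qed.

Lemma contractDl g h (G : P) : contract (g + h) G = contract g G + contract h G.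
Proof. by apply/mpolyP => b; rewrite mcoeffD !coef_contract LsumD. Qed.
Lemma contractZl c g (G : P) : contract (c *: g) G = c *: contract g G.
Proof. by apply/mpolyP => b; rewrite mcoeffZ !coef_contract LsumZ. Qed.
Lemma contract0l (G : P) : contract 0 G = 0.
Proof. by apply/mpolyP => b; rewrite mcoeff0 !coef_contract Lsum0. Qed.
Lemma contractNl g (G : P) : contract (- g) G = - contract g G.
Proof. by rewrite -scaleN1r contractZl scaleN1r. Qed.
Lemma contractBl g h (G : P) : contract (g - h) G = contract g G - contract h G.
Proof. by rewrite contractDl contractNl. Qed.
Lemma contract_suml (I : Type) (r : seq I) (F : I -> P) G :
  contract (\sum_(i <- r) F i) G = \sum_(i <- r) contract (F i) G.
Proof.
elim: r => [|x r IH]; first by rewrite !big_nil contract0l.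
by rewrite !big_cons contractDl IH.
Qed.

Lemma contractDr g (G H : P) : contract g (G + H) = contract g G + contract g H.
Proof.
apply/mpolyP => b; rewrite mcoeffD !coef_contract /Lsum -big_split /=.
by apply: eq_bigr => m _; rewrite mcoeffD mulrDr.
Qed.
Lemma contractZr c g (G : P) : contract g (c *: G) = c *: contract g G.
Proof.
apply/mpolyP => b; rewrite mcoeffZ !coef_contract -Lsum_mull.
by apply: Lsum_ext => m; rewrite mcoeffZ.
Qed.
Lemma contract0r g : contract g (0 : P) = 0.
Proof. by apply/mpolyP => b; rewrite coef_contract mcoeff0 /Lsum big1 // => m _; rewrite mcoeff0 mulr0. Qed.
Lemma contractNr g (G : P) : contract g (- G) = - contract g G.
Proof. by rewrite -scaleN1r contractZr scaleN1r. Qed.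
Lemma contractBr g (G H : P) : contract g (G - H) = contract g G - contract g H.
Proof. by rewrite contractDr contractNr. Qed.
Lemma contract_sumr (I : Type) (r : seq I) (F : I -> P) g :
  contract g (\sum_(i <- r) F i) = \sum_(i <- r) contract g (F i).
Proof.
elim: r => [|x r IH]; first by rewrite !big_nil contract0r.
by rewrite !big_cons contractDr IH.
Qed.

Lemma coef_contractX m (G : P) b : (contract 'X_[m] G)@_b = G@_(m + b).
Proof. by rewrite coef_contract LsumX. Qed.

Lemma contractXX m1 m2 (G : P) :
  contract 'X_[m1 + m2] G = contract 'X_[m1] (contract 'X_[m2] G).
Proof.
apply/mpolyP => b; rewrite !coef_contractX; congr (G@_ _).
by rewrite [(m1 + m2)%MM]addmC addmA.
Qed.

Lemma contractXM m (h G : P) : contract ('X_[m] * h) G = contract 'X_[m] (contract h G).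
Proof.
elim/mpolyind: h => [|c' m' q _ _ IH']; first by rewrite mulr0 !contract0l contract0r.
rewrite mulrDr -scalerAr !contractDl !contractZl contractDr contractZr IH'.
by rewrite -mpolyXD contractXX.
Qed.

Lemma contractM (g h G : P) : contract (g * h) G = contract g (contract h G).
Proof.
elim/mpolyind: g => [|c m p _ _ IH]; first by rewrite mul0r !contract0l.
by rewrite mulrDl -scalerAl !contractDl !contractZl IH contractXM.
Qed.

Lemma contractC (f g G : P) : contract f (contract g G) = contract g (contract f G).
Proof. by rewrite -!contractM mulrC. Qed.

End Gen.



Section S.
Variable k : fieldType.
Variable r : nat.
Local Notation R := {mpoly k[r]}.
Local Notation S := {mpoly k[r.+1]}.
Local Notation wid := (widen_ord (leqnSn r)).

Definition restr (mu : 'X_{1..r.+1}) : 'X_{1..r} := [multinom mu (wid i) | i < r].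
Definition ext (a : 'X_{1..r}) (j : nat) : 'X_{1..r.+1} :=
  (mnmwiden a + U_(@ord_max r) *+ j)%MM.

Lemma Uj_E j (i : 'I_r.+1) : (U_(@ord_max r) *+ j)%MM i = if i == ord_max then j else 0%N.
Proof. by rewrite mulmnE mnm1E eq_sym; case: eqP => _; rewrite ?mul1n ?mul0n. Qed.

Lemma wid_neq (i : 'I_r) : (wid i == ord_max) = false.
Proof. by apply/negbTE; rewrite -val_eqE /= neq_ltn ltn_ord. Qed.

Lemma ext_last a j : (ext a j) ord_max = j.
Proof. by rewrite mnmDE mnmwiden_ordmax Uj_E eqxx. Qed.

Lemma restrE mu (i : 'I_r) : restr mu i = mu (wid i).
Proof. by rewrite mnmE. Qed.

Lemma restr_ext a j : restr (ext a j) = a.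
Proof.
by apply/mnmP => i; rewrite restrE mnmDE mnmwiden_widen Uj_E wid_neq addn0.
Qed.

Lemma ext_restr mu : ext (restr mu) (mu ord_max) = mu.
Proof.
apply/mnmP => i; rewrite mnmDE Uj_E.
have [->|ne] := eqVneq i ord_max; first by rewrite mnmwiden_ordmax.
have lt : (i < r)%N by move: ne (ltn_ord i); rewrite -val_eqE /= ltnS; lia.
have -> : i = wid (Ordinal lt) by apply: val_inj.
by rewrite mnmwiden_widen restrE addn0.
Qed.

Lemma restrD mu nu : restr (mu + nu) = (restr mu + restr nu)%MM.
Proof. by apply/mnmP => i; rewrite mnmDE !restrE mnmDE. Qed.

Lemma restrB mu nu : restr (mu - nu) = (restr mu - restr nu)%MM.
Proof. by apply/mnmP => i; rewrite mnmBE !restrE mnmBE. Qed.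

Lemma ext_eq mu a j : (mu == ext a j) = (mu ord_max == j) && (restr mu == a).
Proof.
apply/eqP/andP => [->|[/eqP h1 /eqP h2]]; first by rewrite ext_last restr_ext.
by rewrite -h1 -h2 ext_restr.
Qed.

Lemma ext0 a : ext a 0 = mnmwiden a.
Proof. by rewrite /ext mulm0n addm0. Qed.

Lemma mwidenE' (g : R) : mwiden g = \sum_(a <- msupp g) g@_a *: 'X_[mnmwiden a].
Proof.
rewrite [in LHS](mpolyE g) raddf_sum; apply: eq_bigr => a _.
by rewrite -mwidenX -mwidenZ.
Qed.

Lemma coef_mwiden (g : R) nu :
  (mwiden g)@_nu = if nu ord_max == 0%N then g@_(restr nu) else 0.
Proof.
rewrite mwidenE' mcoef_sum.
rewrite (eq_bigr (fun a => g@_a * (mnmwiden a == nu)%:R)); last first.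
  by move=> a _; rewrite mcoeffZ mcoeffX.
case: eqP => [h|h].
  rewrite -{1}(ext_restr nu) h ext0.
  rewrite (eq_bigr (fun a => g@_a * (a == restr nu)%:R)); last first.
    by move=> a _; rewrite inj_eq //; exact: inj_mnmwiden.
  by rewrite -(Lsum_ind g) /Lsum.
rewrite big1 // => a _; case: eqP => [ea|]; last by rewrite mulr0.
by case: h; rewrite -ea mnmwiden_ordmax.
Qed.

Lemma coef_MX n (p : {mpoly k[n]}) m mu :
  (p * 'X_[m])@_mu = if (m <= mu)%MM then p@_(mu - m) else 0.
Proof.
case: ifP => h.
  by rewrite -{1}(submK h) addmC mcoeffMX.
apply: memN_msupp_eq0; rewrite (perm_mem (msuppMX _ _)).
by apply/mapP => [[m' _ e]]; move: h; rewrite e lem_addr.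
Qed.

Lemma tvarX j : tvar k r ^+ j = 'X_[U_(@ord_max r) *+ j].
Proof. by rewrite /tvar mpolyXn. Qed.

Lemma Uj_le j mu : ((U_(@ord_max r) *+ j)%MM <= mu)%MM = (j <= mu ord_max)%N.
Proof.
apply/mnm_lepP/idP => [h|h i]; first by move: (h ord_max); rewrite Uj_E eqxx.
by rewrite Uj_E; case: eqP => [->|].
Qed.

Lemma coef_tg j (g : R) mu :
  (tvar k r ^+ j * liftS g)@_mu = if mu ord_max == j then g@_(restr mu) else 0.
Proof.
rewrite mulrC tvarX /liftS coef_MX Uj_le.
case: leqP => h; last by case: eqP => // e; move: h; rewrite e ltnn.
rewrite coef_mwiden mnmBE Uj_E eqxx.
have -> : restr (mu - U_(@ord_max r) *+ j) = restr mu.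
  by apply/mnmP => i; rewrite !restrE mnmBE Uj_E wid_neq subn0.
by congr (if _ then _ else _); apply/eqP/eqP; lia.
Qed.

Definition tcomp (m : nat) (Phi : S) : R :=
  \sum_(mu <- msupp Phi | mu ord_max == m) Phi@_mu *: 'X_[restr mu].

Lemma coef_comp m Phi a : (tcomp m Phi)@_a = Phi@_(ext a m).
Proof.
rewrite /tcomp mcoef_sum /= big_mkcond /=.
rewrite -Lsum_ind /Lsum; apply: eq_bigr => mu _.
rewrite ext_eq; case: eqP => _ /=; last by rewrite mulr0.
by rewrite mcoeffZ mcoeffX eq_sym.
Qed.

Lemma compD m (P Q : S) : tcomp m (P + Q) = tcomp m P + tcomp m Q.
Proof. by apply/mpolyP => a; rewrite mcoeffD !coef_comp mcoeffD. Qed.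
Lemma compZ m c (P : S) : tcomp m (c *: P) = c *: tcomp m P.
Proof. by apply/mpolyP => a; rewrite mcoeffZ !coef_comp mcoeffZ. Qed.
Lemma comp0 m : tcomp m 0 = 0.
Proof. by apply/mpolyP => a; rewrite mcoeff0 !coef_comp mcoeff0. Qed.
Lemma compN m (P : S) : tcomp m (- P) = - tcomp m P.
Proof. by rewrite -scaleN1r compZ scaleN1r. Qed.
Lemma compB m (P Q : S) : tcomp m (P - Q) = tcomp m P - tcomp m Q.
Proof. by rewrite compD compN. Qed.
Lemma comp_sum m (I : Type) (s : seq I) (Pr : pred I) (F : I -> S) :
  tcomp m (\sum_(i <- s | Pr i) F i) = \sum_(i <- s | Pr i) tcomp m (F i).
Proof.
elim: s => [|x s IH]; first by rewrite !big_nil comp0.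
by rewrite !big_cons; case: (Pr x); rewrite ?compD IH.
Qed.

Lemma comp_tg m j g : tcomp m (tvar k r ^+ j * liftS g) = if j == m then g else 0.
Proof.
apply/mpolyP => a; rewrite coef_comp coef_tg ext_last restr_ext eq_sym.
by case: eqP; rewrite ?mcoeff0.
Qed.

Lemma comp_inj (Phi : S) : (forall m, tcomp m Phi = 0) -> Phi = 0.
Proof.
move=> h; apply/mpolyP => mu.
by rewrite mcoeff0 -{1}(ext_restr mu) -coef_comp h mcoeff0.
Qed.

Lemma comp_big m (Phi : S) : (msize Phi <= m)%N -> tcomp m Phi = 0.
Proof.
move=> h; apply/mpolyP => a; rewrite coef_comp mcoeff0 memN_msupp_eq0 //.
apply: msize_mdeg_ge; apply: (leq_trans h).
by rewrite /ext mdegD mdegMn mdeg1 mul1n leq_addl.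
Qed.

Lemma decomp (Phi : S) M : (msize Phi <= M)%N ->
  Phi = \sum_(j < M) tvar k r ^+ j * liftS (tcomp j Phi).
Proof.
move=> hM; apply/eqP; rewrite -subr_eq0; apply/eqP; apply: comp_inj => m.
rewrite compB comp_sum.
rewrite (eq_bigr (fun j : 'I_M => if (j : nat) == m then tcomp j Phi else 0)); last first.
  by move=> j _; rewrite comp_tg.
case: (ltnP m M) => hm.
  rewrite (bigD1 (Ordinal hm)) //= eqxx big1 ?addr0 ?subrr // => j.
  by rewrite -val_eqE /= => /negbTE ->.
rewrite big1 ?comp_big ?subrr //; first exact: leq_trans hM hm.
by move=> j _; rewrite (ltn_eqF (leq_trans (ltn_ord j) hm)).
Qed.

Lemma setT0E (Phi : S) : setT0 Phi = tcomp 0 Phi.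
Proof.
have hX : forall mu : 'X_{1..r.+1},
    'X_[mu] \mPo [tuple (if unlift ord_max i is Some j then 'X_j else 0 : R) | i < r.+1]
    = (mu ord_max == 0%N)%:R * 'X_[restr mu].
  move=> mu; rewrite comp_mpolyX big_ord_recr /= tnth_mktuple unlift_none expr0n mulrC.
  congr (_ * _); rewrite mpolyXE_id; apply: eq_bigr => i _.
  rewrite tnth_mktuple restrE.
  have -> : wid i = lift ord_max i by apply: val_inj; rewrite /= /bump leqNgt ltn_ord.
  by rewrite liftK.
apply/mpolyP => a; rewrite coef_comp /setT0 comp_mpolyEX mcoef_sum /=.
rewrite -Lsum_ind /Lsum; apply: eq_bigr => mu _.
rewrite hX mcoeffZ mulrnAl mul1r mcoeffMn mcoeffX ext_eq.
by case: eqP => _; case: eqP => _; rewrite ?mulr0n ?mulr1n.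
Qed.


Lemma tg_expand j (g : R) :
  tvar k r ^+ j * liftS g = \sum_(a <- msupp g) g@_a *: 'X_[ext a j].
Proof.
rewrite /liftS mwidenE' mulr_sumr; apply: eq_bigr => a _.
by rewrite -scalerAr tvarX -mpolyXD /ext addmC.
Qed.

Lemma Lsum_tg j (g : R) phi :
  Lsum (tvar k r ^+ j * liftS g) phi = Lsum g (fun a => phi (ext a j)).
Proof.
rewrite tg_expand Lsum_sum [RHS]/Lsum; apply: eq_bigr => a _.
by rewrite LsumZ LsumX.
Qed.

Lemma extD_last a j nu : (ext a j + nu)%MM ord_max = (j + nu ord_max)%N.
Proof. by rewrite mnmDE ext_last. Qed.

Lemma contract_tg j m (g G : R) :
  contract (tvar k r ^+ j * liftS g) (tvar k r ^+ m * liftS G) =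
  if (j <= m)%N then tvar k r ^+ (m - j) * liftS (contract g G) else 0.
Proof.
apply/mpolyP => nu; rewrite coef_contract Lsum_tg.
rewrite (Lsum_ext _ (psi := fun a => if (j + nu ord_max == m)%N
   then G@_(a + restr nu) else 0)); last first.
  by move=> a; rewrite coef_tg extD_last restrD restr_ext.
case: leqP => h.
  rewrite coef_tg coef_contract.
  have -> : (j + nu ord_max == m)%N = (nu ord_max == m - j)%N by apply/eqP/eqP; lia.
  case: eqP => _ //; rewrite /Lsum big1 // => a _; by rewrite mulr0.
rewrite mcoeff0 /Lsum big1 // => a _.
by rewrite (_ : (j + nu ord_max == m) = false) ?mulr0 //; apply/eqP; lia.
Qed.

Lemma kt_E (p : {poly k}) N : (size p <= N)%N ->
  kt_to_S r p = \sum_(i < N) p`_i *: tvar k r ^+ i.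
Proof.
move=> h; rewrite /kt_to_S (big_ord_widen N (fun i => p`_i *: tvar k r ^+ i)) //.
rewrite big_mkcond /=; apply: eq_bigr => i _.
by case: ltnP => // hi; rewrite nth_default // scale0r.
Qed.

Lemma ktD (p q : {poly k}) : kt_to_S r (p + q) = kt_to_S r p + kt_to_S r q.
Proof.
set N := maxn (size p) (size q).
rewrite !(@kt_E _ N) ?leq_maxl ?leq_maxr //; last first.
  by apply: leq_trans (size_polyD _ _) _.
by rewrite -big_split; apply: eq_bigr => i _; rewrite coefD scalerDl.
Qed.

Lemma kt_mon (c : k) j : kt_to_S r (c *: 'X^j) = c *: tvar k r ^+ j.
Proof.
rewrite (@kt_E _ j.+1); last by apply: leq_trans (size_scale_leq _ _) _; rewrite size_polyXn.
rewrite big_ord_recr /= big1 ?add0r; first by rewrite coefZ coefXn eqxx mulr1.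
by move=> i _; rewrite coefZ coefXn ltn_eqF // mulr0 scale0r.
Qed.

Lemma kt_X : kt_to_S r 'X = tvar k r.
Proof. by rewrite -(scale1r ('X : {poly k})) -(expr1 ('X : {poly k})) kt_mon scale1r expr1. Qed.

Lemma kt_t0 (p : {poly k}) : p`_0 = 0 ->
  kt_to_S r p = tvar k r * \sum_(i < size p) p`_i.+1 *: tvar k r ^+ i.
Proof.
move=> h0; rewrite (@kt_E _ (size p).+1) // big_ord_recl /= h0 scale0r add0r.
rewrite mulr_sumr; apply: eq_bigr => i _; by rewrite -scalerAr exprS.
Qed.

Lemma comp0_t (Psi : S) : tcomp 0 (tvar k r * Psi) = 0.
Proof.
apply/mpolyP => a; rewrite coef_comp mcoeff0 mulrC /tvar coef_MX.
by rewrite (_ : (U_(ord_max) <= ext a 0)%MM = false) //; rewrite lep1mP ext_last eqxx.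
Qed.

Section F.
Variable n : nat.
Variable G : nat -> R.
Local Notation F := (Fpoly n G).

Lemma sum_pick (X : nat -> R) j m :
  \sum_(i < n) (if (j <= n - 1 - i)%N && (n - 1 - i - j == m)%N then X (i : nat) else 0)
  = if (j + m < n)%N then X (n - 1 - m - j)%N else 0.
Proof.
case: ltnP => h.
  have hi : (n - 1 - m - j < n)%N by lia.
  rewrite (bigD1 (Ordinal hi)) //=.
  rewrite (_ : (j <= n - 1 - (n - 1 - m - j))%N && (n - 1 - (n - 1 - m - j) - j == m)%N) //;
    last by apply/andP; split; [|apply/eqP]; lia.
  rewrite big1 ?addr0 // => i /negbTE hne.
  case: andP => // [[h1 /eqP h2]]; move: hne; rewrite -val_eqE /=.
  have hn := ltn_ord i; by rewrite (_ : (i : nat) = n - 1 - m - j)%N ?eqxx //; lia.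
rewrite big1 // => i _; case: andP => // [[h1 /eqP h2]]; have := ltn_ord i; lia.
Qed.

Lemma KEY (eta : nat -> R) N m :
  tcomp m (contract (\sum_(j < N) tvar k r ^+ j * liftS (eta j)) F) =
  \sum_(j < N | (j + m < n)%N) contract (eta j) (G (n - 1 - m - j)%N).
Proof.
rewrite contract_suml comp_sum [RHS]big_mkcond /=; apply: eq_bigr => j _.
rewrite /Fpoly contract_sumr comp_sum.
rewrite (eq_bigr (fun i : 'I_n => if (j <= n - 1 - i)%N && (n - 1 - i - j == m)%N
   then contract (eta j) (G i) else 0)); last first.
  move=> i _; rewrite contract_tg; case: leqP => h /=; last by rewrite comp0.
  by rewrite comp_tg.
exact: (@sum_pick (fun i => contract (eta j) (G i))).
Qed.

End F.
End S.



Section Main.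
Variable k : fieldType.
Variables r n : nat.
Variable G : nat -> {mpoly k[r]}.
Local Notation R := {mpoly k[r]}.
Local Notation S := {mpoly k[r.+1]}.
Local Notation F := (Fpoly n G).
Local Notation t := (tvar k r).

Lemma sum_cut (X : nat -> R) N d : (d < N)%N ->
  \sum_(j < N | (j <= d)%N) X j = \sum_(j < d.+1) X j.
Proof. by move=> hd; rewrite (big_ord_widen N X hd). Qed.

Lemma KEY' (eta : nat -> R) N d : (d < n)%N -> (d < N)%N ->
  tcomp (n - 1 - d)%N (contract (\sum_(j < N) t ^+ j * liftS (eta j)) F) =
  \sum_(j < d.+1) contract (eta j) (G (d - j)%N).
Proof.
move=> hdn hdN; rewrite KEY -(sum_cut (fun j => contract (eta j) (G (d - j)%N)) hdN).
apply: eq_big => j; first by apply/idP/idP; lia.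
by move=> hj; congr (contract _ (G _)); lia.
Qed.

Lemma ann_of_eqs (eta : nat -> R) N : (n <= N)%N ->
  (forall d, (d < n)%N -> \sum_(j < d.+1) contract (eta j) (G (d - j)%N) = 0) ->
  Ann F (\sum_(j < N) t ^+ j * liftS (eta j)).
Proof.
move=> hN h; apply: comp_inj => m.
case: (ltnP m n) => hm.
  have -> : m = (n - 1 - (n - 1 - m))%N by lia.
  rewrite KEY' ?h //; lia.
rewrite KEY big1 // => j hj; lia.
Qed.

Lemma eqs_of_ann (eta : nat -> R) N : (n <= N)%N ->
  Ann F (\sum_(j < N) t ^+ j * liftS (eta j)) ->
  forall d, (d < n)%N -> \sum_(j < d.+1) contract (eta j) (G (d - j)%N) = 0.
Proof.
move=> hN h d hd; rewrite -(@KEY' eta N) //; last by lia.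
by rewrite /Ann in h; rewrite h comp0.
Qed.

Lemma eqs_of_annF (Phi : S) : Ann F Phi ->
  forall d, (d < n)%N -> \sum_(j < d.+1) contract (tcomp j Phi) (G (d - j)%N) = 0.
Proof.
move=> h; apply: (@eqs_of_ann (fun j => tcomp j Phi) (maxn n (msize Phi))); first exact: leq_maxl.
by rewrite -decomp // leq_maxr.
Qed.

Lemma annF_mul (Psi Phi : S) : Ann F Phi -> Ann F (Psi * Phi).
Proof. by rewrite /Ann contractM => ->; rewrite contract0r. Qed.

Lemma annF_add (P Q : S) : Ann F P -> Ann F Q -> Ann F (P + Q).
Proof. by rewrite /Ann contractDl => -> ->; rewrite addr0. Qed.

Lemma ichain_mul j f h : Ichain G j f -> Ichain G j (f * h).
Proof.
elim: j f h => [|j IH] f h /=.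
  by rewrite /Ann mulrC contractM => ->; rewrite contract0r.
move=> hf g hg; rewrite -mulrA [h * g]mulrC mulrA; exact: (IH _ h (hf g hg)).
Qed.

Lemma ichain_mono j j' f : (j <= j')%N -> Ichain G j f -> Ichain G j' f.
Proof.
move=> hj; rewrite -(subnKC hj); elim: (j' - j)%N => [|d IH]; first by rewrite addn0.
move=> hf; rewrite addnS /= => g _; apply: ichain_mul; exact: IH.
Qed.

Lemma ichain_of j f :
  (forall g : nat -> R, (forall i, (0 < i <= j)%N -> Ann (G i) (g i)) ->
     Ann (G 0) (f * \prod_(1 <= i < j.+1) g i)) -> Ichain G j f.
Proof.
elim: j f => [|j IH] f h /=.
  by have := h (fun _ => 0) (fun i hi => ltac:(lia)); rewrite big_geq // mulr1.
move=> g0 hg0; apply: IH => g hg.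
have := h (fun i => if i == j.+1 then g0 else g i).
rewrite big_nat_recr //= eqxx.
rewrite (@eq_big_nat _ _ _ 1 j.+1 _ g); last by move=> i hi; rewrite ltn_eqF //; lia.
rewrite -mulrA [g0 * _]mulrC.
apply => i hi; case: eqP => [->|ne] //; apply: hg; lia.
Qed.

Lemma prod_kill (g : nat -> R) J i : (0 < i <= J)%N -> Ann (G i) (g i) ->
  contract (\prod_(1 <= l < J.+1) g l) (G i) = 0.
Proof.
move=> hi hg; rewrite (bigD1_seq i) /=; first last.
- exact: iota_uniq.
- by rewrite mem_index_iota; lia.
by rewrite mulrC contractM hg contract0r.
Qed.

Lemma eta_ichain (eta : nat -> R) J :
  \sum_(j < J.+1) contract (eta j) (G (J - j)%N) = 0 -> Ichain G J (eta J).
Proof.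
move=> heq; apply: ichain_of => g hg.
rewrite /Ann mulrC contractM.
move: heq; rewrite big_ord_recr /= subnn => /eqP; rewrite addrC addr_eq0 => /eqP ->.
rewrite contractNr contract_sumr big1 ?oppr0 // => j _.
rewrite contractC prod_kill ?contract0r //; first by have := ltn_ord j; lia.
by apply: hg; have := ltn_ord j; lia.
Qed.

Section Hyp.
Hypothesis H1 : forall i, (i < n)%N -> forall f, Ichain G i f ->
      exists h : R, contract f (G (n - 1 - i)%N) = contract h (G 0).

Lemma construct f : Ann (G 0) f -> exists eta : nat -> R, eta 0%N = f /\
  forall d, (d < n)%N -> \sum_(j < d.+1) contract (eta j) (G (d - j)%N) = 0.
Proof.
move=> hf.
suff : forall D, exists eta : nat -> R, eta 0%N = f /\
  forall d, (d < n)%N -> (d <= D)%N -> \sum_(j < d.+1) contract (eta j) (G (d - j)%N) = 0.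
  case/(_ n) => eta [h0 h]; exists eta; split => // d hd; apply: h => //; lia.
elim => [|D [eta [h0 IH]]].
  exists (fun _ => f); split => // d _; rewrite leqn0 => /eqP ->.
  by rewrite big_ord1 subnn.
case: (ltnP D.+1 n) => hD; last first.
  by exists eta; split => // d hd hdD; apply: IH => //; lia.
have [h hh] : exists h : R, \sum_(j < D.+1) contract (eta j) (G (D.+1 - j)%N)
    = contract h (G 0).
  apply: (big_ind (fun x => exists h : R, x = contract h (G 0))).
  - by exists 0; rewrite contract0l.
  - by move=> x y [hx ->] [hy ->]; exists (hx + hy); rewrite contractDl.
  move=> j _.
  have hj : Ichain G j (eta j).
    by apply: eta_ichain; apply: IH; have := ltn_ord j; lia.
  have hlt := ltn_ord j.
  have hj' : Ichain G (n - 1 - (D.+1 - j))%N (eta j) by apply: ichain_mono hj; lia.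
  have hi : (n - 1 - (D.+1 - j) < n)%N by lia.
  have [h' eh] := H1 hi hj'.
  exists h'; rewrite -eh; congr (contract _ (G _)); have := ltn_ord j; lia.
exists (fun j => if j == D.+1 then - h else eta j); split => // d hd hdD.
case: (ltnP d D.+1) => hdD'.
  rewrite -[RHS](IH d hd) //; apply: eq_bigr => j _.
  by rewrite ltn_eqF //; have := ltn_ord j; lia.
have -> : d = D.+1 by lia.
rewrite big_ord_recr /= eqxx subnn contractNl -hh addrC.
rewrite (eq_bigr (fun j : 'I_D.+1 => contract (eta j) (G (D.+1 - j)%N))).
  by rewrite addNr.
by move=> j _; rewrite ltn_eqF.
Qed.

Lemma COEX f : (0 < n)%N -> Ann (G 0) f -> exists Psi : S, Ann F (liftS f - t * Psi).
Proof.
move=> n0 /construct [eta [h0 heq]].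
have [n' en] : exists n', n = n'.+1 by exists n.-1; lia.
have hle : (n <= n'.+1)%N by rewrite en.
have := @ann_of_eqs eta n'.+1 hle heq.
rewrite big_ord_recl expr0 mul1r h0 => hA.
exists (- \sum_(i < n') t ^+ i * liftS (eta (bump 0 i))).
rewrite mulrN opprK mulr_sumr.
rewrite (eq_bigr (fun i : 'I_n' => t ^+ (bump 0 i) * liftS (eta (bump 0 i)))) //.
by move=> i _; rewrite /bump /= add1n exprS mulrA.
Qed.

End Hyp.
End Main.



Section D.
Variable k : fieldType.
Variables r n : nat.
Variable G : nat -> {mpoly k[r]}.
Local Notation R := {mpoly k[r]}.
Local Notation S := {mpoly k[r.+1]}.
Local Notation F := (Fpoly n G).
Local Notation t := (tvar k r).

Lemma liftS_sum (I : Type) (s : seq I) (Fn : I -> R) :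
  liftS (\sum_(i <- s) Fn i) = \sum_(i <- s) liftS (Fn i).
Proof.
elim: s => [|x s IH]; first by rewrite !big_nil /liftS mwiden0.
by rewrite !big_cons /liftS mwidenD -IH.
Qed.
Lemma liftSD (f g : R) : liftS (f + g) = liftS f + liftS g.
Proof. exact: mwidenD. Qed.
Lemma liftSZ c (f : R) : liftS (c *: f) = c *: liftS f.
Proof. exact: mwidenZ. Qed.
Lemma liftSB (f g : R) : liftS (f - g) = liftS f - liftS g.
Proof. exact: mwidenB. Qed.

Lemma tcomp0_lift (f : R) : tcomp 0 (liftS f) = f.
Proof. by rewrite -(mul1r (liftS f)) -(expr0 t) comp_tg. Qed.

Lemma tcomp0_kt (phi : S) m (a : 'I_m -> {poly k}) (c : 'I_m -> S) :
  (forall j, (a j)`_0 = 0) ->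
  tcomp 0 (phi - \sum_(j < m) kt_to_S r (a j) * c j) = tcomp 0 phi.
Proof.
move=> ha; rewrite compB comp_sum big1 ?subr0 // => j _.
by rewrite (@kt_t0 _ r _ (ha j)) -mulrA comp0_t.
Qed.

Lemma coexact_back (phi : S) m (a : 'I_m -> {poly k}) (c : 'I_m -> S) :
  (0 < n)%N -> (forall j, (a j)`_0 = 0) ->
  Ann F (phi - \sum_(j < m) kt_to_S r (a j) * c j) -> Ann (G 0) (setT0 phi).
Proof.
move=> hn ha hA; have := eqs_of_annF hA hn.
by rewrite big_ord1 subnn tcomp0_kt // setT0E.
Qed.

Lemma coexact_of : (0 < n)%N ->
  (forall f, Ann (G 0) f -> exists Psi : S, Ann F (liftS f - t * Psi)) ->
  coexact F (G 0).
Proof.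
move=> hn hco; split.
  by move=> g; exists (liftS g); rewrite setT0E tcomp0_lift subrr /Ann contract0l.
move=> phi; split; last by case=> m [a [c [ha hA]]]; exact: coexact_back hA.
rewrite setT0E => hf; have [Psi hPsi] := hco _ hf.
have hd := @decomp _ _ phi (msize phi).+1 (leqnSn _).
rewrite big_ord_recl expr0 mul1r in hd.
set rho := \sum_(i < msize phi) t ^+ i * liftS (tcomp i.+1 phi).
have hrho : \sum_(i < msize phi) t ^+ bump 0 i * liftS (tcomp (bump 0 i) phi) = t * rho.
  rewrite /rho mulr_sumr; apply: eq_bigr => i _.
  by rewrite /bump /= add1n exprS mulrA.
exists 1%N, (fun _ => 'X), (fun _ => rho + Psi); split.
  by move=> _; rewrite coefX.
rewrite big_ord1 kt_X {1}hd hrho mulrDr opprD addrA addrK.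
exact: hPsi.
Qed.

Lemma part2 : (0 < n)%N -> coexact F (G 0) ->
  forall i, (1 <= i <= n - 1)%N -> forall f, Ichain G 0 f ->
    exists h : 'I_i -> R, contract f (G i) = \sum_(j < i) contract (h j) (G j).
Proof.
move=> hn [_ hker] i hi f hf.
have := (hker (liftS f)).1; rewrite setT0E tcomp0_lift => /(_ hf).
case=> m [a [c [ha hA]]].
have hi' : (i < n)%N by lia.
have := eqs_of_annF hA hi'.
rewrite big_ord_recl tcomp0_kt // tcomp0_lift subn0 => /eqP.
rewrite addr_eq0 => /eqP ->.
exists (fun j : 'I_i => - tcomp (i - j)%N (liftS f - \sum_(j < m) kt_to_S r (a j) * c j)).
rewrite (reindex_inj rev_ord_inj) /= -sumrN; apply: eq_bigr => j _.
rewrite contractNl; congr (- contract (tcomp _ _) (G _)); rewrite /bump /= add1n; have := ltn_ord j; lia.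
Qed.

End D.



Section E.
Variable k : fieldType.
Variables r n : nat.
Variable G : nat -> {mpoly k[r]}.
Local Notation R := {mpoly k[r]}.
Local Notation S := {mpoly k[r.+1]}.
Local Notation F := (Fpoly n G).
Local Notation t := (tvar k r).

Definition dep (a : 'X_{1..r}) : Prop := exists p : R,
  (forall b, b \in msupp p -> (pickle b < pickle a)%N) /\
  contract 'X_[a] (G 0) = contract p (G 0).

Definition Nb (a : 'X_{1..r}) : bool :=
  if excluded_middle_informative (dep a) then false else true.

Lemma NbP a : Nb a = false -> dep a.
Proof. by rewrite /Nb; case: excluded_middle_informative. Qed.
Lemma NbN a : Nb a -> ~ dep a.
Proof. by rewrite /Nb; case: excluded_middle_informative. Qed.

Definition Ib := {a : 'X_{1..r} | Nb a}.

Lemma ann_add (x y : R) : Ann (G 0) x -> Ann (G 0) y -> Ann (G 0) (x + y).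
Proof. by rewrite /Ann contractDl => -> ->; rewrite addr0. Qed.

Definition SpanR (g : R) := exists L : seq (Ib * k),
  Ann (G 0) (g - \sum_(x <- L) x.2 *: 'X_[val x.1]).

Lemma spanR_add g h : SpanR g -> SpanR h -> SpanR (g + h).
Proof.
case=> L1 h1 [L2 h2]; exists (L1 ++ L2); rewrite big_cat /=.
have -> : g + h - (\sum_(x <- L1) x.2 *: 'X_[val x.1] + \sum_(x <- L2) x.2 *: 'X_[val x.1])
  = (g - \sum_(x <- L1) x.2 *: 'X_[val x.1]) + (h - \sum_(x <- L2) x.2 *: 'X_[val x.1]).
  by rewrite opprD addrACA.
exact: ann_add.
Qed.

Lemma spanR_scale c g : SpanR g -> SpanR (c *: g).
Proof.
case=> L h; exists [seq (x.1, c * x.2) | x <- L]; rewrite big_map /=.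
rewrite (eq_bigr (fun x => c *: (x.2 *: 'X_[val x.1]))); last by move=> x _; rewrite scalerA.
by rewrite -scaler_sumr -scalerBr /Ann contractZl h scaler0.
Qed.

Lemma spanR_transfer g g' : Ann (G 0) (g - g') -> SpanR g' -> SpanR g.
Proof.
move=> hg [L h]; exists L.
have -> : g - \sum_(x <- L) x.2 *: 'X_[val x.1] = (g - g') + (g' - \sum_(x <- L) x.2 *: 'X_[val x.1]).
  by rewrite addrA subrK.
exact: ann_add.
Qed.

Lemma spanR_sum (T : eqType) (s : seq T) (Fn : T -> R) :
  (forall x, x \in s -> SpanR (Fn x)) -> SpanR (\sum_(x <- s) Fn x).
Proof.
elim: s => [|x s IH] h; first by exists [::]; rewrite !big_nil subr0 /Ann contract0l.
rewrite big_cons; apply: spanR_add; first by apply: h; rewrite mem_head.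
by apply: IH => y hy; apply: h; rewrite in_cons hy orbT.
Qed.

Lemma spanR_X K a : (pickle a < K)%N -> SpanR 'X_[a].
Proof.
elim: K a => [//|K IH] a ha.
case hN: (Nb a).
  exists [:: (exist _ a hN, 1)]; rewrite big_seq1 /= scale1r subrr /Ann contract0l //.
have [p [hp hc]] := NbP hN.
apply: (@spanR_transfer _ p); first by rewrite /Ann contractBl hc subrr.
rewrite [p]mpolyE; apply: spanR_sum => b hb; apply: spanR_scale; apply: IH.
by have := hp b hb; lia.
Qed.

Lemma spanR_all g : SpanR g.
Proof.
rewrite [g]mpolyE; apply: spanR_sum => b _; apply: spanR_scale.
exact: (@spanR_X (pickle b).+1).
Qed.

Lemma msupp_comb (s : seq Ib) (c : Ib -> k) b :
  b \in msupp (\sum_(i <- s) c i *: 'X_[val i] : R) -> exists2 i, i \in s & b = val i.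
Proof.
elim: s => [|x s IH]; first by rewrite big_nil msupp0.
rewrite big_cons => /msuppD_le; rewrite mem_cat => /orP [h|h].
  by move/msuppZ_le: h; rewrite msuppX mem_seq1 => /eqP ->; exists x; rewrite ?mem_head.
by case: (IH h) => i hi ->; exists i; rewrite // in_cons hi orbT.
Qed.

Lemma pickle_val_inj : injective (fun i : Ib => pickle (val i)).
Proof. by move=> i j /(pcan_inj pickleK) /val_inj. Qed.

Lemma indepR_K K (l : seq Ib) (c : Ib -> k) : uniq l ->
  (forall i, i \in l -> (pickle (val i) < K)%N) ->
  Ann (G 0) (\sum_(i <- l) c i *: 'X_[val i]) -> forall i, i \in l -> c i = 0.
Proof.
elim: K l => [|K IH] l ul hK hA.
  by move=> i /hK.
case: (boolP (has (fun i => pickle (val i) == K) l)) => [/hasP [i0 hi0 /eqP pK]|hno];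
  last first.
  apply: IH => // i hi; have := hK i hi; rewrite ltnS leq_eqVlt => /orP [/eqP e|//].
  by case/negP: hno; apply/hasP; exists i => //; rewrite e.
have hrem : forall i, i \in rem i0 l -> (pickle (val i) < K)%N.
  move=> i; rewrite (mem_rem_uniq _ ul) => /andP [ne hi].
  have := hK i hi; rewrite ltnS leq_eqVlt => /orP [/eqP e|//].
  by case/negP: ne; apply/eqP/pickle_val_inj; rewrite /= e pK.
move: hA; rewrite (big_rem i0) //= => hA.
have c0 : c i0 = 0.
  apply/eqP/negPn/negP => nz.
  apply: (NbN (valP i0)).
  exists (- (c i0)^-1 *: \sum_(y <- rem i0 l) c y *: 'X_[val y]); split.
    move=> b /msuppZ_le /msupp_comb [i hi ->]; rewrite pK; exact: hrem.
  move: hA; rewrite -[sval i0]/(val i0) /Ann contractDl contractZl => /eqP; rewrite addr_eq0 => /eqP h.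
  rewrite contractZl -[X in _ = _ *: X]opprK -h.
  by rewrite scaleNr scalerN opprK scalerA mulVf // scale1r.
move: hA; rewrite c0 scale0r add0r => hA.
move=> i hi; have [->|ne] := eqVneq i i0; first exact: c0.
apply: (IH (rem i0 l)) => //; first exact: rem_uniq.
by rewrite (mem_rem_uniq _ ul) inE ne.
Qed.

Lemma indepR (l : seq Ib) (c : Ib -> k) : uniq l ->
  Ann (G 0) (\sum_(i <- l) c i *: 'X_[val i]) -> forall i, i \in l -> c i = 0.
Proof.
move=> ul; apply: (@indepR_K (\sum_(i <- l) (pickle (val i)).+1)%N) => // i hi.
by rewrite (big_rem i) //= ltnS leq_addr.
Qed.


Definition sB (i : Ib) : S := liftS 'X_[val i].

Definition SpanS (phi : S) := exists L : seq (Ib * {poly k}),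
  Ann F (phi - \sum_(x <- L) kt_to_S r x.2 * sB x.1).

Lemma annF_addS (P Q : S) : Ann F P -> Ann F Q -> Ann F (P + Q).
Proof. by rewrite /Ann contractDl => -> ->; rewrite addr0. Qed.

Lemma spanS_add g h : SpanS g -> SpanS h -> SpanS (g + h).
Proof.
case=> L1 h1 [L2 h2]; exists (L1 ++ L2); rewrite big_cat /=.
rewrite opprD addrACA; exact: annF_addS.
Qed.

Lemma spanS_transfer g g' : Ann F (g - g') -> SpanS g' -> SpanS g.
Proof.
move=> hg [L h]; exists L.
rewrite -(subrK g' g) -addrA; exact: annF_addS.
Qed.

Lemma spanS_sum (T : Type) (s : seq T) (Fn : T -> S) :
  (forall x, SpanS (Fn x)) -> SpanS (\sum_(x <- s) Fn x).
Proof.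
move=> h; elim: s => [|x s IH]; first by exists [::]; rewrite !big_nil subr0 /Ann contract0l.
by rewrite big_cons; apply: spanS_add.
Qed.

Lemma ann_high j (g : R) : (n <= j)%N -> Ann F (t ^+ j * liftS g).
Proof.
move=> hj; rewrite /Ann /Fpoly contract_sumr big1 // => i _.
by rewrite contract_tg; case: leqP => //; have := ltn_ord i; lia.
Qed.

Hypothesis hco : forall f, Ann (G 0) f -> exists Psi : S, Ann F (liftS f - t * Psi).

Lemma spanS_tg K j g : (n - j <= K)%N -> SpanS (t ^+ j * liftS g).
Proof.
elim: K j g => [|K IH] j g hK.
  by exists [::]; rewrite big_nil subr0; apply: ann_high; lia.
case: (leqP n j) => hj.
  by exists [::]; rewrite big_nil subr0; apply: ann_high.
have [L0 hL0] := spanR_all g.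
set e := g - _ in hL0.
have [Psi hPsi] := hco hL0.
have -> : g = \sum_(x <- L0) x.2 *: 'X_[val x.1] + e by rewrite /e addrC subrK.
rewrite liftSD mulrDr; apply: spanS_add.
  exists [seq (x.1, x.2 *: 'X^j) | x <- L0]; rewrite big_map.
  rewrite liftS_sum mulr_sumr -sumrB big1 ?/Ann ?contract0l // => x _.
  by rewrite kt_mon liftSZ -scalerAl -scalerAr subrr.
apply: (@spanS_transfer _ (t ^+ j.+1 * Psi)).
  by rewrite exprSr -mulrA -mulrBr; apply: annF_mul.
rewrite (@decomp _ _ Psi (msize Psi)) // mulr_sumr; apply: spanS_sum => i.
rewrite mulrA -exprD; apply: IH; lia.
Qed.

Lemma spanS_all phi : SpanS phi.
Proof.
rewrite (@decomp _ _ phi (msize phi)) //; apply: spanS_sum => i.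
by apply: (@spanS_tg n); lia.
Qed.

Lemma conv (L : seq (Ib * {poly k})) : exists (l : seq Ib) (a : Ib -> {poly k}),
  uniq l /\ \sum_(i <- l) kt_to_S r (a i) * sB i = \sum_(x <- L) kt_to_S r x.2 * sB x.1.
Proof.
elim: L => [|[i p] L [l [a [ul hl]]]].
  by exists [::], (fun _ => 0); rewrite !big_nil.
rewrite big_cons /= -hl.
case: (boolP (i \in l)) => hi.
  exists l, (fun j => if j == i then p + a j else a j); split => //.
  rewrite (bigD1_seq i) //= eqxx [in RHS](bigD1_seq i) //= ktD mulrDl -addrA.
  by congr (_ + _); congr (_ + _); apply: eq_bigr => j /negbTE ->.
exists (i :: l), (fun j => if j == i then p else a j); split.
  by rewrite cons_uniq hi.
rewrite big_cons eqxx; congr (_ + _); rewrite big_seq_cond [RHS]big_seq_cond.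
apply: eq_bigr => j /andP [hj _]; case: eqP => // e; by move: hi; rewrite -e hj.
Qed.

Lemma indepS (l : seq Ib) (a : Ib -> {poly k}) : uniq l ->
  Ann F (\sum_(i <- l) kt_to_S r (a i) * sB i) -> forall i, i \in l -> ('X^n %| a i)%R.
Proof.
move=> ul hA.
set N := (n + \sum_(i <- l) size (a i))%N.
have hsz : forall i, i \in l -> (size (a i) <= N)%N.
  by move=> i hi; rewrite /N (big_rem i) //=; lia.
pose psi := fun j => \sum_(i <- l) (a i)`_j *: ('X_[val i] : R).
have hexp : \sum_(i <- l) kt_to_S r (a i) * sB i = \sum_(j < N) t ^+ j * liftS (psi j).
  rewrite big_seq (eq_bigr (fun i => \sum_(j < N) ((a i)`_j *: t ^+ j) * sB i)); last first.
    by move=> i hi; rewrite (@kt_E _ _ _ N (hsz i hi)) mulr_suml.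
  rewrite -big_seq exchange_big /=; apply: eq_bigr => j _.
  rewrite /psi liftS_sum mulr_sumr; apply: eq_bigr => i _.
  by rewrite liftSZ -scalerAl -scalerAr.
rewrite hexp in hA.
have heqs := @eqs_of_ann _ _ _ G psi N (leq_addr _ _) hA.
have key : forall d, (d < n)%N -> psi d = 0 /\ forall i, i \in l -> (a i)`_d = 0.
  elim/ltn_ind => d IHd hd.
  have hann : Ann (G 0) (psi d).
    move: (heqs d hd); rewrite big_ord_recr /= subnn big1 ?add0r // => j _.
    have hjn : (j < n)%N by have := ltn_ord j; lia.
    by rewrite (IHd j (ltn_ord j) hjn).1 contract0l.
  have hc := indepR (c := fun i => (a i)`_d) ul hann.
  split => //; rewrite /psi big_seq big1 // => i hi; by rewrite hc // scale0r.
move=> i hi; rewrite -(poly_take_drop n (a i)).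
have -> : take_poly n (a i) = 0.
  apply/polyP => j; rewrite coef_take_poly coef0; case: ifP => // hj.
  exact: (key j hj).2.
by rewrite add0r dvdp_mull.
Qed.

Lemma free_of : free_over_A n F.
Proof.
exists Ib, sB; split.
  move=> phi; have [L hL] := spanS_all phi.
  have [l [a [_ e]]] := conv L; exists l, a; by rewrite e.
move=> l a ul hA i hi; exact: (indepS ul hA hi).
Qed.

End E.


Theorem theorem2p1 (k : fieldType) (r n jB : nat)
  (FB : {mpoly k[r]}) (G : nat -> {mpoly k[r]}) :
  (2 <= n)%N ->
  homog_of jB FB ->
  G 0%N = FB ->
  (forall i, (1 <= i <= n - 1)%N -> homog_of (jB + i) (G i)) ->
  ((forall i, (i < n)%N -> forall f, Ichain G i f ->
      exists h : {mpoly k[r]}, contract f (G (n - 1 - i)%N) = contract h FB) ->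
     coexact (Fpoly n G) FB /\ free_extension n (Fpoly n G) FB)
  /\
  (free_extension n (Fpoly n G) FB ->
     forall i, (1 <= i <= n - 1)%N -> forall f, Ichain G 0 f ->
       exists h : 'I_i -> {mpoly k[r]},
         contract f (G i) = \sum_(j < i) contract (h j) (G j)).
Proof.
move=> hn _ e0 _; subst FB.
have hn0 : (0 < n)%N by apply: leq_trans hn.
split.
  move=> H1.
  have hco : forall f, Ann (G 0%N) f ->
      exists Psi, Ann (Fpoly n G) (liftS f - tvar k r * Psi).
    by move=> f hf; exact: (COEX H1 hn0 hf).
  have hcx := coexact_of hn0 hco.
  split => //; split => //; exact: free_of hco.
by case=> _ hcx; exact: part2.
Qed.
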